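(* Let $a,b\in(0,1)$ and $c_1,c_2>0$ with $ac_1<1$, $ac_2<1$. For every $x,y\in\mathbb Z_{\ge0}$, with all matrix products and series understood entrywise, $$\mathbf M^{\rightarrow}_x[a]\mathbf M^{\downarrow}_y[b]=(ab)^{\min\{x,y\}}(1-ab)\sum_{z\ge\max\{0,y-x\}}\mathbf M^{\downarrow}_z[b]\mathbf M^{\rightarrow}_{x-y+z}[a],$$ $$\mathbf w^t\mathbf M^{\downarrow}_x[a]=(ac_1)^x(1-ac_1)\sum_{y\ge0}\mathbf w^t\mathbf M^{\rightarrow}_y[a],\qquad \mathbf M^{\rightarrow}_x[a]\mathbf v=(ac_2)^x(1-ac_2)\sum_{y\ge0}\mathbf M^{\downarrow}_y[a]\mathbf v.$$
   Context: For $x\in\mathbb Z_{\ge0}$ and $a\in(0,1)$, $\mathbf M^{\rightarrow}_x[a]$ and $\mathbf M^{\downarrow}_x[a]$ are the infinite matrices indexed by $\mathbb Z_{\ge0}\times\mathbb Z_{\ge0}$ with entries $\mathbf M^{\rightarrow}_x[a](n,n')=a^{2x+n-n'}\mathbf 1_{n'\ge x}\mathbf 1_{x+n-n'\ge0}$ and $\mathbf M^{\downarrow}_x[a](n,n')=\mathbf M^{\rightarrow}_x[a](n',n)=a^{2x+n'-n}\mathbf 1_{n\ge x}\mathbf 1_{x+n'-n\ge0}$. The vectors $\mathbf w,\mathbf v\in\mathbb R^{\mathbb Z_{\ge0}}$ are $\mathbf w(n)=c_1^n$, $\mathbf v(n)=c_2^n$. *)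

(* Defs.v *)
From Stdlib Require Import Reals Arith.
From Coquelicot Require Import Coquelicot.
Open Scope R_scope.

Definition imat := nat -> nat -> R.
Definition ivec := nat -> R.

Definition Mright (x : nat) (a : R) : imat := fun n n' =>
  if andb (Nat.leb x n') (Nat.leb n' (x + n)) then a ^ (2 * x + n - n') else 0.

Definition Mdown (x : nat) (a : R) : imat := fun n n' => Mright x a n' n.

Definition geomvec (c : R) : ivec := fun n => c ^ n.

Definition mmul_terms (A B : imat) (n n' : nat) : nat -> R := fun k => A n k * B k n'.
Definition mmul (A B : imat) : imat := fun n n' => Series (mmul_terms A B n n').

Definition vmul_terms (w : ivec) (M : imat) (n' : nat) : nat -> R := fun n => w n * M n n'.
Definition vmul (w : ivec) (M : imat) : ivec := fun n' => Series (vmul_terms w M n').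

Definition mvmul_terms (M : imat) (v : ivec) (n : nat) : nat -> R := fun n' => M n n' * v n'.
Definition mvmul (M : imat) (v : ivec) : ivec := fun n => Series (mvmul_terms M v n).

(* Main.v *)
From Stdlib Require Import Reals Arith Lia Lra FunctionalExtensionality.
From Coquelicot Require Import Coquelicot.
Open Scope R_scope.
Require Import Defs.
Open Scope R_scope.

Lemma ser_fin (u : nat -> R) (N : nat) :
  (forall k, (N < k)%nat -> u k = 0) -> is_series u (sum_n u N).
Proof.
  intros H.
  apply (is_series_decr_n u (S N)); [lia|].
  simpl pred.
  match goal with |- is_series _ ?l => replace l with 0 end.
  2:{ unfold plus, opp; simpl. change (0 = sum_n u N + - sum_n u N). ring. }
  apply is_series_ext with (a := fun k => (/2) ^ k * 0).
  - intros k. rewrite H by lia. apply Rmult_0_r.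
  - assert (Z : is_series (fun k => (/2) ^ k * 0) (/ (1 - /2) * 0)).
    { apply is_series_scal_r. apply is_series_geom. rewrite Rabs_pos_eq; lra. }
    rewrite Rmult_0_r in Z. exact Z.
Qed.

Lemma ser_geom (u : nat -> R) (K : nat) (C q : R) :
  Rabs q < 1 ->
  (forall k, (k < K)%nat -> u k = 0) ->
  (forall k, u (K + k)%nat = C * q ^ k) ->
  is_series u (C / (1 - q)).
Proof.
  intros Hq H0 H1.
  assert (G : is_series (fun k => u (K + k)%nat) (C / (1 - q))).
  { apply is_series_ext with (a := fun k => scal C (q ^ k)).
    - intros k. rewrite H1. reflexivity.
    - unfold Rdiv. apply (is_series_scal_l C _ (/ (1 - q))). now apply is_series_geom. }
  destruct K as [|K].
  - apply is_series_ext with (2 := G). intros k. reflexivity.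
  - apply (is_series_decr_n u (S K)); [lia|].
    simpl pred.
    assert (S0 : sum_f_R0 u K = 0).
    { transitivity (sum_f_R0 (fun _ => 0) K).
      * apply sum_eq. intros i Hi. apply H0. lia.
      * clear. induction K; simpl; [reflexivity|]. rewrite IHK. ring. }
    match goal with |- is_series _ ?l => replace l with (C / (1 - q)); [exact G|] end.
    unfold plus, opp; simpl. change (C/(1-q) = C/(1-q) + - sum_n u K).
    rewrite sum_n_Reals, S0. ring.
Qed.

Lemma sum_rev (t : nat -> R) (N : nat) :
  sum_f_R0 (fun j => t (N - j)%nat) N = sum_f_R0 t N.
Proof.
  revert t. induction N as [|N IH]; intros t.
  - reflexivity.
  - rewrite (decomp_sum t (S N)) by lia. simpl pred.
    simpl sum_f_R0 at 1. rewrite Nat.sub_diag.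
    rewrite <- (IH (fun i => t (S i))).
    rewrite Rplus_comm. f_equal. apply sum_eq. intros i Hi. destruct i; f_equal; lia.
Qed.

Lemma ser_zero (u : nat -> R) : (forall k, u k = 0) -> is_series u 0.
Proof.
  intros H. assert (E : sum_n u 0 = 0) by (rewrite sum_O; apply H).
  rewrite <- E. apply ser_fin. intros; apply H.
Qed.

Ltac leb_cases := repeat match goal with |- context [Nat.leb ?p ?q] => destruct (Nat.leb_spec p q) end; cbn [andb].

Lemma part2 (a c : R) (ha : 0 < a < 1) (hc : 0 < c) (hac : a * c < 1) (x n' : nat) :
     ex_series (vmul_terms (geomvec c) (Mdown x a) n') /\
     (forall y : nat, ex_series (vmul_terms (geomvec c) (Mright y a) n')) /\
     is_series
       (fun y : nat => (a * c) ^ x * (1 - a * c) * vmul (geomvec c) (Mright y a) n')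
       (vmul (geomvec c) (Mdown x a) n').
Proof.
  set (t := vmul_terms (geomvec c) (Mdown x a) n').
  set (N := (x + n')%nat).
  assert (Ht : is_series t (sum_n t N)).
  { apply ser_fin. intros k Hk. unfold t, vmul_terms, Mdown, Mright. leb_cases; try lia; ring. }
  assert (Hq : Rabs (a * c) < 1).
  { rewrite Rabs_pos_eq; [lra|]. apply Rmult_le_pos; lra. }
  assert (Hy : forall y, is_series (vmul_terms (geomvec c) (Mright y a) n')
     (if Nat.leb y n' then c ^ (n' - y) * a ^ y / (1 - a * c) else 0)).
  { intros y. destruct (Nat.leb_spec y n').
    - apply ser_geom with (K := (n' - y)%nat).
      + exact Hq.
      + intros k Hk. unfold vmul_terms, Mright. leb_cases; try lia; ring.
      + intros k. unfold vmul_terms, Mright, geomvec. leb_cases; try lia.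
        replace (2 * y + (n' - y + k) - n')%nat with (y + k)%nat by lia.
        rewrite !pow_add, Rpow_mult_distr. ring.
    - apply ser_zero. intros k. unfold vmul_terms, Mright. leb_cases; try lia; ring. }
  split; [exists (sum_n t N); exact Ht|].
  split; [intros y; eexists; apply Hy|].
  change (vmul (geomvec c) (Mdown x a) n') with (Series t). rewrite (is_series_unique _ _ Ht).
  set (f := fun y : nat => (a * c) ^ x * (1 - a * c) * vmul (geomvec c) (Mright y a) n').
  assert (Hf : forall y, f y = if Nat.leb y N then t (N - y)%nat else 0).
  { intros y. unfold f, vmul. rewrite (is_series_unique _ _ (Hy y)).
    unfold t, N, vmul_terms, Mdown, Mright, geomvec. leb_cases; try lia; try ring.
    replace (2 * x + n' - (x + n' - y))%nat with (x + y)%nat by lia.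
    replace (x + n' - y)%nat with (x + (n' - y))%nat by lia.
    rewrite !pow_add, Rpow_mult_distr. field. lra. }
  assert (Hs : sum_n f N = sum_n t N).
  { rewrite !sum_n_Reals. rewrite <- (sum_rev t N). apply sum_eq. intros i Hi.
    rewrite Hf. destruct (Nat.leb_spec i N); [reflexivity|lia]. }
  rewrite <- Hs. apply ser_fin. intros k Hk. rewrite Hf. destruct (Nat.leb_spec k N); [lia|reflexivity].
Qed.

Lemma pow_id (a b : R) (m p q P Q : nat) : (P = m + p)%nat -> (Q = m + q)%nat ->
  (a * b) ^ m * (b ^ q * a ^ p) = a ^ P * b ^ Q.
Proof. intros -> ->. rewrite !pow_add, Rpow_mult_distr. ring. Qed.

Lemma part1 (a b : R) (ha : 0 < a < 1) (hb : 0 < b < 1) (x y n n' : nat) :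
     ex_series (mmul_terms (Mright x a) (Mdown y b) n n') /\
     (forall z : nat,
        ex_series (mmul_terms (Mdown z b) (Mright (x + z - y) a) n n')) /\
     is_series
       (fun j : nat =>
          let z := ((y - x) + j)%nat in
          (a * b) ^ (Nat.min x y) * (1 - a * b)
          * mmul (Mdown z b) (Mright (x + z - y) a) n n')
       (mmul (Mright x a) (Mdown y b) n n').
Proof.
  set (t := mmul_terms (Mright x a) (Mdown y b) n n').
  set (N := Nat.min (x + n) (y + n')).
  assert (Ht : is_series t (sum_n t N)).
  { apply ser_fin. intros k Hk. unfold t, mmul_terms, Mdown, Mright. leb_cases; try lia; ring. }
  assert (Hq : Rabs (a * b) < 1).
  { rewrite Rabs_pos_eq; [|apply Rmult_le_pos; lra].
    apply Rle_lt_trans with (1 * b); [apply Rmult_le_compat_r; lra| lra]. }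
  assert (Hab : 1 - a * b <> 0) by (rewrite Rabs_pos_eq in Hq; [lra|apply Rmult_le_pos; lra]).
  assert (Hz : forall z w, is_series (mmul_terms (Mdown z b) (Mright w a) n n')
     (if andb (Nat.leb z n) (Nat.leb w n') then
        b ^ (2 * z + Nat.max (n - z) (n' - w) - n) * a ^ (2 * w + Nat.max (n - z) (n' - w) - n') / (1 - a * b)
      else 0)).
  { intros z w. destruct (Nat.leb_spec z n); destruct (Nat.leb_spec w n'); cbn [andb].
    - apply ser_geom with (K := Nat.max (n - z) (n' - w)).
      + exact Hq.
      + intros k Hk. unfold mmul_terms, Mdown, Mright. leb_cases; try lia; ring.
      + intros k. unfold mmul_terms, Mdown, Mright. leb_cases; try lia.
        replace (2 * z + (Nat.max (n - z) (n' - w) + k) - n)%nat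
          with ((2 * z + Nat.max (n - z) (n' - w) - n) + k)%nat by lia.
        replace (2 * w + (Nat.max (n - z) (n' - w) + k) - n')%nat
          with ((2 * w + Nat.max (n - z) (n' - w) - n') + k)%nat by lia.
        rewrite !pow_add, Rpow_mult_distr. ring.
    - apply ser_zero. intros k. unfold mmul_terms, Mdown, Mright. leb_cases; try lia; ring.
    - apply ser_zero. intros k. unfold mmul_terms, Mdown, Mright. leb_cases; try lia; ring.
    - apply ser_zero. intros k. unfold mmul_terms, Mdown, Mright. leb_cases; try lia; ring. }
  split; [exists (sum_n t N); exact Ht|].
  split; [intros z; eexists; apply Hz|].
  change (mmul (Mright x a) (Mdown y b) n n') with (Series t). rewrite (is_series_unique _ _ Ht).
  set (f := fun j : nat =>
          let z := ((y - x) + j)%nat in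
          (a * b) ^ (Nat.min x y) * (1 - a * b)
          * mmul (Mdown z b) (Mright (x + z - y) a) n n').
  assert (Hf : forall j, f j = if Nat.leb j N then t (N - j)%nat else 0).
  { intros j. unfold f, mmul. rewrite (is_series_unique _ _ (Hz _ _)).
    unfold t, N, mmul_terms, Mdown, Mright. leb_cases; try lia; try ring.
    transitivity ((a * b) ^ Nat.min x y *
      (b ^ (2 * (y - x + j) + Nat.max (n - (y - x + j)) (n' - (x + (y - x + j) - y)) - n) *
       a ^ (2 * (x + (y - x + j) - y) + Nat.max (n - (y - x + j)) (n' - (x + (y - x + j) - y)) - n'))).
    { field. exact Hab. }
    apply pow_id; lia. }
  assert (Hs : sum_n f N = sum_n t N).
  { rewrite !sum_n_Reals. rewrite <- (sum_rev t N). apply sum_eq. intros i Hi.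
    rewrite Hf. destruct (Nat.leb_spec i N); [reflexivity|lia]. }
  rewrite <- Hs. apply ser_fin. intros k Hk. rewrite Hf. destruct (Nat.leb_spec k N); [lia|reflexivity].
Qed.

Theorem proposition2p21 (a b c1 c2 : R)
  (ha : 0 < a < 1) (hb : 0 < b < 1) (hc1 : 0 < c1) (hc2 : 0 < c2)
  (hac1 : a * c1 < 1) (hac2 : a * c2 < 1) :
  (* first identity; z ranges over z >= max(0, y-x), written z = (y - x)%nat + j *)
  (forall (x y n n' : nat),
     ex_series (mmul_terms (Mright x a) (Mdown y b) n n') /\
     (forall z : nat,
        ex_series (mmul_terms (Mdown z b) (Mright (x + z - y) a) n n')) /\
     is_series
       (fun j : nat =>
          let z := ((y - x) + j)%nat in
          (a * b) ^ (Nat.min x y) * (1 - a * b)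
          * mmul (Mdown z b) (Mright (x + z - y) a) n n')
       (mmul (Mright x a) (Mdown y b) n n')) /\
  (* second identity *)
  (forall (x n' : nat),
     ex_series (vmul_terms (geomvec c1) (Mdown x a) n') /\
     (forall y : nat, ex_series (vmul_terms (geomvec c1) (Mright y a) n')) /\
     is_series
       (fun y : nat => (a * c1) ^ x * (1 - a * c1) * vmul (geomvec c1) (Mright y a) n')
       (vmul (geomvec c1) (Mdown x a) n')) /\
  (* third identity *)
  (forall (x n : nat),
     ex_series (mvmul_terms (Mright x a) (geomvec c2) n) /\
     (forall y : nat, ex_series (mvmul_terms (Mdown y a) (geomvec c2) n)) /\
     is_series
       (fun y : nat => (a * c2) ^ x * (1 - a * c2) * mvmul (Mdown y a) (geomvec c2) n)
       (mvmul (Mright x a) (geomvec c2) n)).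
Proof.
  split; [intros; apply part1; assumption|].
  split; [intros; apply part2; assumption|].
  intros x n.
  assert (E1 : mvmul_terms (Mright x a) (geomvec c2) n = vmul_terms (geomvec c2) (Mdown x a) n).
  { apply functional_extensionality; intros k. unfold mvmul_terms, vmul_terms, Mdown. ring. }
  assert (E2 : forall y, mvmul_terms (Mdown y a) (geomvec c2) n = vmul_terms (geomvec c2) (Mright y a) n).
  { intros y. apply functional_extensionality; intros k. unfold mvmul_terms, vmul_terms, Mdown. ring. }
  destruct (part2 a c2 ha hc2 hac2 x n) as [H1 [H2 H3]].
  split; [rewrite E1; exact H1|].
  split; [intros y; rewrite E2; apply H2|].
  unfold mvmul at 2. rewrite E1.
  apply is_series_ext with (2 := H3). intros y. unfold mvmul, vmul. rewrite E2. reflexivity.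
Qed.
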